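(* Let $\beta>0$ and let $p,d$ be nonnegative integers. Then $\Phi_\beta(p,d)=\Phi_\beta(p,0)^{d+1}$, and $\Phi_\beta(p,0)$ is the smallest positive root of the equation $$y^{p+1}-(\beta+1)y+\beta=0.$$ In particular, if $\beta\ge p$, then $\Phi_\beta(p,d)=1$ for all integers $d\ge 0$, i.e. $W_\beta$ crosses the line $y=px+d$ almost surely.
   Context: For $\beta>0$, the $\beta$-biased monotonic random walk $W_\beta$ is the random walk on $\mathbb{Z}^2$ starting at the origin $(0,0)$ which, independently at each step, moves from $(a,b)$ to $(a+1,b)$ with probability $1/(\beta+1)$ and to $(a,b+1)$ with probability $\beta/(\beta+1)$. For nonnegative integers $p,d$, $\Phi_\beta(p,d)$ denotes the probability that $W_\beta$ crosses the line $y=px+d$, i.e. the probability that $W_\beta$ visits at least one of the lattice points $(n,pn+d+1)$, $n\ge 0$. *)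

(* Defs.v *)
From Stdlib Require Import Reals Arith List.
Import ListNotations.
Open Scope R_scope.

(* A step of the walk: [false] = move (a,b) -> (a+1,b)   (prob 1/(beta+1)),
                       [true]  = move (a,b) -> (a,b+1)   (prob beta/(beta+1)). *)
Definition step_prob (beta : R) (s : bool) : R :=
  if s then beta / (beta + 1) else 1 / (beta + 1).

Fixpoint path_weight (beta : R) (w : list bool) : R :=
  match w with
  | [] => 1
  | s :: r => step_prob beta s * path_weight beta r
  end.

Fixpoint all_paths (N : nat) : list (list bool) :=
  match N with
  | O => [[]]
  | S n => map (cons false) (all_paths n) ++ map (cons true) (all_paths n)
  end.

(* Starting at lattice point (a,b), does the walk following [w] visit a
   point of the form (n, p*n + d + 1)?  (The current point (a,b) itself is
   not tested; at the origin it never has this form.) *)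
Fixpoint hits (p d : nat) (a b : nat) (w : list bool) : bool :=
  match w with
  | [] => false
  | s :: r =>
      let a' := if s then a else S a in
      let b' := if s then S b else b in
      Nat.eqb b' (p * a' + d + 1)%nat || hits p d a' b' r
  end.

Definition PhiN (beta : R) (p d : nat) (N : nat) : R :=
  fold_right Rplus 0
    (map (fun w => if hits p d 0 0 w then path_weight beta w else 0)
         (all_paths N)).

(* Phi_beta(p,d) = x : the probability of the (increasing union) event
   "W_beta visits some (n, p n + d + 1)" equals x, i.e. by continuity of
   probability, the finite-horizon probabilities converge to x. *)
Definition Phi_is (beta : R) (p d : nat) (x : R) : Prop :=
  Un_cv (PhiN beta p d) x.

Definition smallest_pos_root (beta : R) (p : nat) (y : R) : Prop :=
  0 < y /\ y ^ (p + 1) - (beta + 1) * y + beta = 0 /\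
  forall z, 0 < z -> z ^ (p + 1) - (beta + 1) * z + beta = 0 -> y <= z.

(* Main.v *)
Require Import Defs.
From Stdlib Require Import Reals Arith List Lia Lra.
Import ListNotations.
Open Scope R_scope.

Section G.
Variables (a c : R) (p : nat).
Hypothesis Ha : 0 <= a.
Hypothesis Hc : 0 <= c.

Fixpoint G (N k : nat) {struct N} : R :=
  match N with
  | O => match k with O => 1 | S _ => 0 end
  | S N' => match k with O => 1 | S k' => a * G N' k' + c * G N' (S k' + p) end
  end.

Lemma G_0 N : G N 0 = 1.
Proof. destruct N; reflexivity. Qed.

Lemma G_nonneg N : forall k, 0 <= G N k.
Proof.
  induction N; intros [|k]; simpl; try lra.
  pose proof (IHN k); pose proof (IHN (S (k+p))).
  apply Rplus_le_le_0_compat; apply Rmult_le_pos; auto.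
Qed.

Lemma G_le_root z : 0 <= z -> z = a + c * z ^ (S p) ->
  forall N k, G N k <= z ^ k.
Proof.
  intros Hz Hr. induction N; intros [|k]; simpl; try lra.
  - apply Rmult_le_pos; auto; apply pow_le; auto.
  - pose proof (IHN k); pose proof (IHN (S (k+p))).
    apply Rle_trans with (a * z ^ k + c * z ^ (S (k+p))).
    + apply Rplus_le_compat; apply Rmult_le_compat_l; auto.
    + replace (z ^ S (k+p)) with (z^k * z ^ S p).
      2:{ rewrite <- pow_add. f_equal. lia. }
      assert (E: z ^ S k = z^k * (a + c * z ^ S p)) by (rewrite <- Hr; simpl; ring).
      simpl in E |- *. rewrite E; right; ring.
Qed.

Lemma G_mono N : forall k, G N k <= G (S N) k.
Proof.
  induction N; intros [|k].
  - simpl; lra.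
  - simpl G at 1. apply G_nonneg.
  - simpl; lra.
  - change (G (S N) (S k)) with (a * G N k + c * G N (S k + p)).
    change (G (S (S N)) (S k)) with (a * G (S N) k + c * G (S N) (S k + p)).
    apply Rplus_le_compat; apply Rmult_le_compat_l; auto.
Qed.

Lemma G_mono_add N M k : G N k <= G (M + N) k.
Proof.
  induction M; simpl. lra. eapply Rle_trans; [apply IHM| apply G_mono].
Qed.

Lemma G_super N : forall M k j, G N k * G M j <= G (N + M) (k + j).
Proof.
  induction N; intros M [|k] j.
  - simpl; lra.
  - simpl. rewrite Rmult_0_l. apply G_nonneg.
  - rewrite Rmult_1_l. rewrite Nat.add_0_l.
    pose proof (G_mono_add M (S N) j) as H. exact H.
  - change (G (S N) (S k)) with (a * G N k + c * G N (S k + p)).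
    change (S N + M)%nat with (S (N + M)). change (S k + j)%nat with (S (k + j)).
    change (G (S (N+M)) (S (k+j))) with (a * G (N+M) (k+j) + c * G (N+M) (S (k+j) + p)).
    pose proof (IHN M k j). pose proof (IHN M (S k + p)%nat j).
    replace (S (k+j) + p)%nat with (S k + p + j)%nat by lia.
    rewrite Rmult_plus_distr_r, !Rmult_assoc.
    apply Rplus_le_compat; apply Rmult_le_compat_l; auto.
Qed.

Lemma G_sub (L : R) j : (forall n, G n j <= L) ->
  forall N k, G N (k + j) <= G N k * L.
Proof.
  intros HL. induction N; intros [|k].
  - change (G 0 0) with 1. rewrite Rmult_1_l. apply HL.
  - simpl. lra.
  - rewrite G_0, Rmult_1_l. apply HL.
  - change (S k + j)%nat with (S (k + j)).
    change (G (S N) (S k)) with (a * G N k + c * G N (S k + p)).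
    change (G (S N) (S (k+j))) with (a * G N (k+j) + c * G N (S (k+j) + p)).
    pose proof (IHN k). pose proof (IHN (S k + p)%nat).
    replace (S (k+j) + p)%nat with (S k + p + j)%nat by lia.
    rewrite Rmult_plus_distr_r, !Rmult_assoc.
    apply Rplus_le_compat; apply Rmult_le_compat_l; auto.
Qed.

End G.
Section Lim.
Variables (a c : R) (p : nat).
Hypothesis Ha : 0 <= a.
Hypothesis Hc : 0 <= c.
Hypothesis Hac : a + c = 1.

Lemma G_le1 N k : G a c p N k <= 1.
Proof.
  rewrite <- (pow1 k). apply G_le_root; auto; try lra. rewrite pow1; lra.
Qed.

Lemma G_has_ub k : has_ub (fun n => G a c p n k).
Proof.
  exists 1. intros x [i ->]. apply G_le1.
Qed.

Lemma G_growing k : Un_growing (fun n => G a c p n k).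
Proof. intro n. apply G_mono; auto. Qed.

Definition L k : R := proj1_sig (growing_cv _ (G_growing k) (G_has_ub k)).

Lemma L_cv k : Un_cv (fun n => G a c p n k) (L k).
Proof. unfold L. destruct (growing_cv _ _ _); auto. Qed.

Lemma G_le_L n k : G a c p n k <= L k.
Proof. apply (growing_ineq (fun n => G a c p n k)). apply G_growing. apply L_cv. Qed.

Lemma cv_const (x : R) : Un_cv (fun _ => x) x.
Proof. intros e He. exists 0%nat. intros. unfold Rdist. rewrite Rminus_diag, Rabs_R0. auto. Qed.

Lemma cv_le_const u l M : Un_cv u l -> (forall n, u n <= M) -> l <= M.
Proof. intros. apply (@Rle_cv_lim u (fun _ => M) l M); auto. apply cv_const. Qed.

Lemma cv_shift u l : Un_cv u l -> Un_cv (fun n => u (S n)) l.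
Proof. intros H e He. destruct (H e He) as [N HN]. exists N. intros. apply HN. lia. Qed.

Lemma L_0 : L 0 = 1.
Proof.
  apply (UL_sequence (fun n => G a c p n 0)). apply L_cv.
  eapply Un_cv_ext; [|apply cv_const]. intro n; simpl. rewrite G_0; auto.
Qed.

Lemma L_mult k j : L (k + j) = L k * L j.
Proof.
  apply Rle_antisym.
  - apply (@Rle_cv_lim (fun n => G a c p n (k+j)) (fun n => G a c p n k * L j)).
    + intro n. apply G_sub; auto. intro; apply G_le_L.
    + apply L_cv.
    + apply CV_mult. apply L_cv. apply cv_const.
  - apply (cv_le_const (fun n => G a c p n k * G a c p n j)).
    + apply CV_mult; apply L_cv.
    + intro n. eapply Rle_trans. apply G_super; auto. apply G_le_L.
Qed.

Lemma L_pow k : L k = L 1 ^ k.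
Proof.
  induction k. simpl. apply L_0.
  replace (S k) with (k + 1)%nat by lia. rewrite L_mult, IHk, pow_add, pow_1; reflexivity.
Qed.

Lemma L_root : L 1 = a + c * L 1 ^ (S p).
Proof.
  apply (UL_sequence (fun n => G a c p (S n) 1)).
  - apply (cv_shift (fun n => G a c p n 1)). apply L_cv.
  - rewrite <- L_pow. eapply Un_cv_ext.
    2:{ apply CV_plus. apply cv_const. apply CV_mult. apply cv_const. apply (L_cv (S p)). }
    intro n. simpl. rewrite G_0. ring.
Qed.

Lemma L_min z : 0 <= z -> z = a + c * z ^ (S p) -> L 1 <= z.
Proof.
  intros. apply (cv_le_const (fun n => G a c p n 1)). apply L_cv.
  intro n. rewrite <- (pow_1 z). apply G_le_root; auto.
Qed.

Lemma L_pos : 0 < a -> 0 < L 1.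
Proof.
  intro. apply Rlt_le_trans with (G a c p 1 1). simpl. rewrite Rmult_1_r.
  pose proof (G_nonneg a c p Ha Hc 0 (S p)). nra. apply G_le_L.
Qed.
End Lim.
Definition sumf (f : list bool -> R) (l : list (list bool)) : R :=
  fold_right Rplus 0 (map f l).

Lemma sumf_app f l1 l2 : sumf f (l1 ++ l2) = sumf f l1 + sumf f l2.
Proof. unfold sumf in *; induction l1; simpl. ring. rewrite IHl1. ring. Qed.

Lemma sumf_map f g l : sumf f (map g l) = sumf (fun x => f (g x)) l.
Proof. unfold sumf in *; induction l; simpl. ring. rewrite IHl. ring. Qed.

Lemma sumf_ext f g l : (forall x, f x = g x) -> sumf f l = sumf g l.
Proof. unfold sumf in *; intros H; induction l; simpl. ring. rewrite IHl, H. ring. Qed.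

Lemma sumf_scale k f l : sumf (fun x => k * f x) l = k * sumf f l.
Proof. induction l; simpl. unfold sumf; simpl; ring. unfold sumf in *; simpl. rewrite IHl. ring. Qed.

Lemma total_weight beta : 0 < beta -> forall N, sumf (path_weight beta) (all_paths N) = 1.
Proof.
  intros Hb N. induction N; simpl. unfold sumf; simpl. ring.
  rewrite sumf_app, !sumf_map. simpl.
  rewrite (sumf_scale (step_prob beta false) (path_weight beta)).
  rewrite (sumf_scale (step_prob beta true) (path_weight beta)).
  rewrite IHN. unfold step_prob. field. lra.
Qed.

Section Bridge.
Variables (beta : R) (p d : nat).
Hypothesis Hb : 0 < beta.

Definition Sm N x y := sumf (fun w => if hits p d x y w then path_weight beta w else 0) (all_paths N).

Lemma bridge N : forall x y k, (p * x + d = y + k)%nat -> Sm N x y = G (step_prob beta true) (step_prob beta false) p N (S k).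
Proof.
  induction N; intros x y k Hk.
  - unfold Sm, sumf; simpl. ring.
  - unfold Sm. simpl all_paths. rewrite sumf_app, !sumf_map.
    assert (E1: Nat.eqb y (p * S x + d + 1) = false).
    { apply Nat.eqb_neq. rewrite Nat.mul_succ_r. lia. }
    rewrite (sumf_ext _ (fun w => step_prob beta false * (if hits p d (S x) y w then path_weight beta w else 0))).
    2:{ intro w. change (hits p d x y (false::w)) with (Nat.eqb y (p * S x + d + 1) || hits p d (S x) y w)%bool.
        rewrite E1. simpl orb. change (path_weight beta (false::w)) with (step_prob beta false * path_weight beta w).
        destruct hits; ring. }
    rewrite sumf_scale. fold (Sm N (S x) y).
    rewrite (IHN (S x) y (k + p)%nat) by (rewrite Nat.mul_succ_r; lia).
    change (G (step_prob beta true) (step_prob beta false) p (S N) (S k)) with (step_prob beta true * G (step_prob beta true) (step_prob beta false) p N k + step_prob beta false * G (step_prob beta true) (step_prob beta false) p N (S k + p)).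
    replace (S k + p)%nat with (S (k+p)) by lia.
    destruct k as [|k].
    + assert (E2: Nat.eqb (S y) (p * x + d + 1) = true) by (apply Nat.eqb_eq; lia).
      rewrite (sumf_ext _ (fun w => step_prob beta true * path_weight beta w)).
      2:{ intro w. change (hits p d x y (true::w)) with (Nat.eqb (S y) (p * x + d + 1) || hits p d x (S y) w)%bool.
        rewrite E2. reflexivity. }
      rewrite sumf_scale, total_weight by auto. rewrite G_0. ring.
    + assert (E2: Nat.eqb (S y) (p * x + d + 1) = false) by (apply Nat.eqb_neq; lia).
      rewrite (sumf_ext _ (fun w => step_prob beta true * (if hits p d x (S y) w then path_weight beta w else 0))).
      2:{ intro w. change (hits p d x y (true::w)) with (Nat.eqb (S y) (p * x + d + 1) || hits p d x (S y) w)%bool.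
        rewrite E2. simpl orb. change (path_weight beta (true::w)) with (step_prob beta true * path_weight beta w).
        destruct hits; ring. }
      rewrite sumf_scale. fold (Sm N x (S y)).
      rewrite (IHN x (S y) k) by lia. ring.
Qed.

Lemma PhiN_G N : PhiN beta p d N = G (step_prob beta true) (step_prob beta false) p N (S d).
Proof. apply (bridge N 0 0 d). lia. Qed.
End Bridge.
Lemma bern (y : R) (n : nat) : 0 <= y <= 1 -> 1 - y ^ n <= INR n * (1 - y).
Proof.
  intros Hy. induction n. simpl. lra.
  rewrite S_INR. simpl.
  assert (0 <= y ^ n <= 1).
  { clear IHn. induction n; simpl; nra. }
  nra.
Qed.

Lemma f_pos (beta y : R) (p : nat) : 0 < beta -> INR p <= beta -> 0 <= y < 1 ->
  0 < y ^ (p + 1) - (beta + 1) * y + beta.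
Proof.
  intros Hb Hp Hy.
  pose proof (bern y p ltac:(lra)) as Hb'.
  pose proof (pos_INR p).
  replace (y ^ (p+1)) with (y * y ^ p) by (rewrite pow_add; simpl; ring).
  assert (0 <= (beta - INR p) * y) by (apply Rmult_le_pos; lra).
  assert (0 < beta * (1 - y)) by (apply Rmult_lt_0_compat; lra).
  assert (y * (1 - y ^ p) <= y * (INR p * (1 - y))) by (apply Rmult_le_compat_l; lra).
  nra.
Qed.

Theorem theorem1 (beta : R) (p : nat) (Hbeta : 0 < beta) :
  (exists phi0 : R,
      Phi_is beta p 0 phi0 /\
      smallest_pos_root beta p phi0 /\
      (forall d : nat, Phi_is beta p d (phi0 ^ (d + 1)))) /\
  (INR p <= beta -> forall d : nat, Phi_is beta p d 1).
Proof.
  set (a := step_prob beta true). set (c := step_prob beta false).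
  assert (Ha : 0 < a) by (unfold a, step_prob; apply Rdiv_lt_0_compat; lra).
  assert (Hc : 0 <= c) by (unfold c, step_prob; apply Rlt_le, Rdiv_lt_0_compat; lra).
  assert (Hac : a + c = 1) by (unfold a, c, step_prob; field; lra).
  set (phi0 := L a c p (Rlt_le _ _ Ha) Hc Hac 1).
  assert (Hcv : forall d, Phi_is beta p d (phi0 ^ (d + 1))).
  { intro d. unfold Phi_is, phi0. rewrite <- L_pow. rewrite Nat.add_1_r.
    eapply Un_cv_ext; [|apply L_cv]. intro n. simpl. rewrite PhiN_G by auto. reflexivity. }
  assert (Hroot : forall z, 0 < z -> z ^ (p + 1) - (beta + 1) * z + beta = 0 -> phi0 <= z).
  { intros z Hz Hf. unfold phi0. apply L_min; [lra|].
    unfold a, c, step_prob. rewrite <- Nat.add_1_r.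
    set (Z := z ^ (p+1)) in *. assert (HZ : Z = (beta+1)*z - beta) by lra.
    rewrite HZ. field. lra. }
  assert (Hphi : smallest_pos_root beta p phi0).
  { split; [|split; auto].
    - unfold phi0. apply L_pos; auto.
    - pose proof (L_root a c p (Rlt_le _ _ Ha) Hc Hac) as H. fold phi0 in H.
      unfold a, c, step_prob in H. rewrite <- Nat.add_1_r in H.
      set (Y := phi0 ^ (p+1)) in *.
      assert ((beta+1)*phi0 = beta + Y).
      { rewrite H at 1. field. lra. }
      lra. }
  split.
  - exists phi0. split; [|split; auto].
    pose proof (Hcv 0%nat) as H. simpl in H. rewrite Rmult_1_r in H. exact H.
  - intros Hp d.
    assert (E : phi0 = 1).
    { apply Rle_antisym.
      - apply Hroot. lra. simpl. rewrite pow1. ring.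
      - destruct (Rlt_le_dec phi0 1) as [Hlt|]; auto. exfalso.
        destruct Hphi as [Hpos [Hr _]].
        pose proof (f_pos beta phi0 p Hbeta Hp ltac:(lra)). lra. }
    pose proof (Hcv d) as H. rewrite E, pow1 in H. exact H.
Qed.
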